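(* Consider a secure index coding problem $(W_i\mid A_i,P_i)$, $i\in[m]$, on $n$ messages, a securely achievable symmetric rate $R$, and a set function $g:2^{[n]}\to\mathbb R$ satisfying conditions (G1)–(G6) of the context with $R_i=R$ for all $i$. Let $L_1,L_2,\ldots,L_k\subseteq[n]$ be such that for every $j\in[k-1]$ either $L_j - L_{j+1}$ or $L_j\subseteq L_{j+1}$. Then $$g(L_k)\ge g(L_1)+R\cdot\sum_{\ell\in[k-1]}h(L_\ell,L_{\ell+1}).$$
   Context: Secure index coding: $n$ independent uniformly distributed messages $X_i\in\{0,1\}^{t_i}$; $m$ parties, party $i$ with side information $A_i\subseteq[n]$, requested set $W_i\subseteq[n]\setminus A_i$ (possibly empty), interfering set $B_i=[n]\setminus(A_i\cup W_i)$, prohibited set $P_i\subseteq B_i$. A $(\mathbf t,M)$ secure index code is a deterministic surjective encoder $Y=\phi(X_{[n]})\in\{1,\ldots,M\}$ with $H(X_{W_i}\mid Y,X_{A_i})=0$ for all $i$ and $I(X_j;Y\mid X_{A_i})=0$ for all $j\in P_i$; rates $R_i=t_i/\log M$. Standing assumption: the problem is feasible (its symmetric secure capacity is positive). Conditions on $g$: (G1) $\sum_{i\in W}R_i=g(B\cup W)-g(B)=g(W)$ for all $i\in[m]$, $W\subseteq W_i$, $B\subseteq (B_i\cup W_i)\setminus W$; (G2) $g(\emptyset)=0$; (G3) $g([n])\le1$; (G4) $g(S)\le g(S')$ whenever $S\subseteq S'$; (G5) $g(S\cap S')+g(S\cup S')\le g(S)+g(S')$; (G6) $g(B_i)=g(B_i\setminus\{j\})$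 for all $j\in P_i$, $i\in[m]$. Relation $S - S'$: for each $i$ with $P_i\ne\emptyset$ and $T\subseteq[n]\setminus B_i$, $N(i,T)=\{T\cup B_i\setminus\{j\}:j\in P_i\}\cup\{T\cup B_i\}$; repeatedly merge intersecting such families until pairwise disjoint; $S - S'$ iff $S,S'$ lie in the same resulting family. Acyclic sets: $K\subseteq[n]\setminus S$ is acyclic w.r.t. $S$ if it can be ordered $K=\{k_1,\ldots,k_r\}$ so that for each $\ell$ some party $j_\ell$ has $k_\ell\in W_{j_\ell}$ and $S\cup\{k_1,\ldots,k_\ell\}\subseteq B_{j_\ell}\cup W_{j_\ell}$. For $S\subseteq S'$, $h_{\rm MAIS}(S,S')=\max\{|K|:K\subseteq S'\setminus S\text{ acyclic w.r.t. }S\}$. For any $S,S'\subseteq[n]$, $h(S,S')=h_{\rm MAIS}(S,S')$ if $S\subseteq S'$ and $h(S,S')=0$ otherwise. *)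

(* Defs.v *)
From HB Require Import structures.
From mathcomp Require Import all_boot all_order all_algebra.
From mathcomp Require Import reals exp.
From Stdlib Require Import Relations.
Set Implicit Arguments. Unset Strict Implicit. Unset Printing Implicit Defensive.
Import Order.TTheory GRing.Theory Num.Theory.
Local Open Scope ring_scope.

(* An index coding problem on n messages and m parties is given by
   A W P : 'I_m -> {set 'I_n}. Messages/parties are indexed from 0. *)

Definition Bset (n m : nat) (A W : 'I_m -> {set 'I_n}) (i : 'I_m) : {set 'I_n} :=
  ~: (A i :|: W i).

Definition sic_problem (n m : nat) (A W P : 'I_m -> {set 'I_n}) : Prop :=
  forall i, W i \subset ~: A i /\ P i \subset Bset A W i.

(* A message tuple: X_i in {0,1}^{t_i}, encoded as an element of 'I_(2^t_i). *)
Definition msgs (n : nat) (t : 'I_n -> nat) := {dffun forall k : 'I_n, 'I_(2 ^ t k)}.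

(* Y = phi(X) in {0,..,M-1} (i.e. M values), phi deterministic and surjective;
   decodability  H(X_{W_i} | Y, X_{A_i}) = 0  and security
   I(X_j ; Y | X_{A_i}) = 0 (j in P_i), the latter written for independent
   uniform messages as: the number of message tuples with given X_{A_i},
   given X_j = b and given Y = y does not depend on b. *)
Definition secure_index_code (n m : nat) (A W P : 'I_m -> {set 'I_n})
    (t : 'I_n -> nat) (M : nat) (phi : msgs t -> 'I_M) : Prop :=
  (forall y : 'I_M, exists x, phi x = y) /\
  (forall (i : 'I_m) (x x' : msgs t), phi x = phi x' ->
      (forall a, a \in A i -> x a = x' a) ->
      forall w, w \in W i -> x w = x' w) /\
  (forall (i : 'I_m) (j : 'I_n), j \in P i ->
     forall (x0 : msgs t) (y : 'I_M) (b b' : 'I_(2 ^ t j)),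
       #|[set x : msgs t | [forall a in A i, x a == x0 a] && (x j == b) && (phi x == y)]|
     = #|[set x : msgs t | [forall a in A i, x a == x0 a] && (x j == b') && (phi x == y)]|).

Definition log2 (K : realType) (x : K) : K := ln x / ln 2.

Definition sym_securely_achievable (K : realType) (n m : nat)
    (A W P : 'I_m -> {set 'I_n}) (r : K) : Prop :=
  exists (t : 'I_n -> nat) (M : nat) (phi : msgs t -> 'I_M),
    (1 < M)%N /\ secure_index_code A W P phi /\
    forall k : 'I_n, (t k)%:R / log2 (M%:R : K) = r.

(* standing assumption: symmetric secure capacity is positive *)
Definition sic_feasible (K : realType) (n m : nat) (A W P : 'I_m -> {set 'I_n}) : Prop :=
  exists r : K, 0 < r /\ sym_securely_achievable A W P r.

Definition G_conditions (K : realType) (n m : nat) (A W P : 'I_m -> {set 'I_n})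
    (r : K) (g : {set 'I_n} -> K) : Prop :=
  (forall (i : 'I_m) (V Bs : {set 'I_n}), V \subset W i ->
      Bs \subset (Bset A W i :|: W i) :\: V ->
      \sum_(k in V) r = g (Bs :|: V) - g Bs /\ g (Bs :|: V) - g Bs = g V) /\
  g set0 = 0 /\
  g setT <= 1 /\
  (forall S S' : {set 'I_n}, S \subset S' -> g S <= g S') /\
  (forall S S' : {set 'I_n}, g (S :&: S') + g (S :|: S') <= g S + g S') /\
  (forall (i : 'I_m) (j : 'I_n), j \in P i ->
              g (Bset A W i) = g (Bset A W i :\ j)).

Definition Nfam (n m : nat) (A W P : 'I_m -> {set 'I_n}) (i : 'I_m) (T : {set 'I_n})
    : {set {set 'I_n}} :=
  [set (T :|: Bset A W i) :\ j | j in P i] :|: [set T :|: Bset A W i].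

Definition Nrel (n m : nat) (A W P : 'I_m -> {set 'I_n}) (S S' : {set 'I_n}) : Prop :=
  exists (i : 'I_m) (T : {set 'I_n}),
    P i != set0 /\ T \subset ~: Bset A W i /\
    S \in Nfam A W P i T /\ S' \in Nfam A W P i T.

(* merging intersecting families until pairwise disjoint: S - S' iff S and S'
   are connected through a chain of basic families *)
Definition dash (n m : nat) (A W P : 'I_m -> {set 'I_n}) (S S' : {set 'I_n}) : Prop :=
  clos_trans _ (Nrel A W P) S S'.

Definition acyclic (n m : nat) (A W : 'I_m -> {set 'I_n}) (S Kset : {set 'I_n}) : bool :=
  (Kset \subset ~: S) &&
  [exists f : {ffun 'I_#|Kset| -> 'I_n},
     [&& injectiveb f, [forall l, f l \in Kset] &
        [forall l, [exists j : 'I_m,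
           (f l \in W j) &&
           (S :|: [set f l' | l' in [set l'' : 'I_#|Kset| | (l'' <= l)%N]]
              \subset Bset A W j :|: W j)]]]].

Definition hMAIS (n m : nat) (A W : 'I_m -> {set 'I_n}) (S S' : {set 'I_n}) : nat :=
  \max_(Kset : {set 'I_n} | (Kset \subset S' :\: S) && acyclic A W S Kset) #|Kset|.

Definition hfun (n m : nat) (A W : 'I_m -> {set 'I_n}) (S S' : {set 'I_n}) : nat :=
  if S \subset S' then hMAIS A W S S' else 0%N.

(* Main.v *)
Require Import Defs.
From HB Require Import structures.
From mathcomp Require Import all_boot all_order all_algebra.
From mathcomp Require Import reals exp.
From mathcomp Require Import lra.
From Stdlib Require Import Relations.
Import Order.TTheory GRing.Theory Num.Theory.
Local Open Scope ring_scope.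

Lemma acyc_bound (K : realType) (n m : nat) (A W P : 'I_m -> {set 'I_n})
    (r : K) (g : {set 'I_n} -> K) (S S' Kset : {set 'I_n}) :
  G_conditions A W P r g -> S \subset S' -> Kset \subset S' :\: S ->
  acyclic A W S Kset -> g S + r * (#|Kset|)%:R <= g S'.
Proof.
move=> HG SS' KS /andP[KnS /existsP[f /and3P[/injectiveP finj /forallP fK /forallP fc]]].
case: HG => HG1 [_ [_ [HG4 _]]].
pose U p := S :|: [set f l | l in [set l : 'I_#|Kset| | (l < p)%N]].
have HU : forall p, (p <= #|Kset|)%N -> g (U p) = g S + r * p%:R.
  elim=> [|p IH] Hp.
    have -> : U 0%N = S.
      rewrite /U; apply/setP => x; rewrite in_setU.
      case: (x \in S) => //=; apply/imsetP => -[l]; by rewrite inE ltn0.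
    by rewrite mulr0 addr0.
  have Hp' : (p < #|Kset|)%N by [].
  pose l0 := Ordinal Hp'.
  have [j /andP[fW fsub]] := existsP (fc l0).
  have EU : U p.+1 = U p :|: [set f l0].
    rewrite /U -setUA; congr (_ :|: _); apply/setP => x; rewrite in_setU in_set1.
    apply/imsetP/idP.
      move=> [l]; rewrite inE ltnS leq_eqVlt => /orP[/eqP El|Hl] ->.
        have -> : l = l0 by apply: val_inj.
        by rewrite eqxx orbT.
      by apply/orP; left; apply/imsetP; exists l; rewrite ?inE.
    case/orP => [/imsetP[l]|/eqP ->].
      by rewrite inE => Hl ->; exists l; rewrite // inE ltnS ltnW.
    by exists l0; rewrite // inE /=.
  have H1 : [set f l0] \subset W j by rewrite sub1set.
  have H2 : U p \subset (Bset A W j :|: W j) :\: [set f l0].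
    apply/subsetP => x Hx; rewrite in_setD in_set1; apply/andP; split.
      apply/eqP => Ex; move: Hx; rewrite /U in_setU Ex => /orP[Hs|/imsetP[l]].
        by move: (subsetP KnS _ (fK l0)); rewrite inE Hs.
      rewrite inE => Hl /finj El; move: Hl; by rewrite -El /= ltnn.
    apply: (subsetP fsub); move: Hx; rewrite /U !in_setU => /orP[->//|/imsetP[l]].
    rewrite inE => Hl ->; apply/orP; right; apply/imsetP; exists l => //.
    by rewrite inE /= ltnW.
  have [E _] := HG1 j _ _ H1 H2.
  rewrite big_set1 in E.
  rewrite EU; have := IH (ltnW Hp); rewrite -addn1 natrD mulrDr mulr1.
  move=> IH'; lra.
rewrite -(HU _ (leqnn _)); apply: HG4; apply/subsetP => x.
rewrite /U in_setU => /orP[/(subsetP SS')//|/imsetP[l _ ->]].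
by move: (subsetP KS _ (fK l)); rewrite inE => /andP[].
Qed.
Arguments acyc_bound {K n m A W P r g S S' Kset}.


Lemma h_bound (K : realType) (n m : nat) (A W P : 'I_m -> {set 'I_n})
    (r : K) (g : {set 'I_n} -> K) (S S' : {set 'I_n}) :
  G_conditions A W P r g -> S \subset S' ->
  g S + r * (hMAIS A W S S')%:R <= g S'.
Proof.
move=> HG SS'; rewrite /hMAIS.
case: (pickP (fun Kset : {set 'I_n} => (Kset \subset S' :\: S) && acyclic A W S Kset)) => [K0 HK0|H0].
  rewrite (@bigop.bigmax_eq_arg _ K0 _ _ HK0).
  case: arg_maxnP => // K1 /andP[HK1 HK2] _.
  exact: acyc_bound HG SS' HK1 HK2.
rewrite big_pred0 // mulr0 addr0.
by case: HG => _ [_ [_ [HG4 _]]]; apply: HG4.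
Qed.
Arguments h_bound {K n m A W P r g S S'}.


Lemma N_member (K : realType) (n m : nat) (A W P : 'I_m -> {set 'I_n})
    (r : K) (g : {set 'I_n} -> K) (i : 'I_m) (T S : {set 'I_n}) :
  sic_problem A W P -> G_conditions A W P r g ->
  T \subset ~: Bset A W i -> S \in Nfam A W P i T -> g S = g (T :|: Bset A W i).
Proof.
move=> Hpb HG HT; rewrite /Nfam in_setU in_set1 => /orP[/imsetP[j jP ->]|/eqP -> //].
case: HG => _ [_ [_ [HG4 [HG5 HG6]]]].
have jB : j \in Bset A W i by have [_ /subsetP] := Hpb i; apply.
have := HG6 i j jP. have := HG5 (Bset A W i) ((T :|: Bset A W i) :\ j).
have := HG4 ((T :|: Bset A W i) :\ j) (T :|: Bset A W i) (subsetDl _ _).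
move: HT jB; move: (Bset A W i) => B HT jB.
have jT : j \notin T by apply/negP => /(subsetP HT); rewrite inE jB.
have E1 : B :&: ((T :|: B) :\ j) = B :\ j.
  apply/setP=> x; rewrite !inE; case: (x =P j) => [->|_]; rewrite ?jB ?(negbTE jT) //=.
  by case: (x \in B); case: (x \in T).
have E2 : B :|: ((T :|: B) :\ j) = T :|: B.
  apply/setP=> x; rewrite !inE; case: (x =P j) => [->|_]; rewrite ?jB ?(negbTE jT) ?orbT //=.
  by case: (x \in B); case: (x \in T).
rewrite E1 E2 => H4 H5 H6; rewrite -H6 in H5.
apply/eqP; rewrite eq_le H4 /=; lra.
Qed.
Arguments N_member {K n m A W P r g i T S}.


Lemma dash_eq (K : realType) (n m : nat) (A W P : 'I_m -> {set 'I_n})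
    (r : K) (g : {set 'I_n} -> K) S S' :
  sic_problem A W P -> G_conditions A W P r g ->
  dash A W P S S' -> g S = g S'.
Proof.
move=> Hpb HG; elim=> [x y [i [T [_ [HT [Hx Hy]]]]]|x y z _ IH1 _ IH2].
  by rewrite (N_member Hpb HG HT Hx) (N_member Hpb HG HT Hy).
by rewrite IH1 IH2.
Qed.
Arguments dash_eq {K n m A W P r g S S'}.


Theorem lemma3 (K : realType) (n m : nat) (A W P : 'I_m -> {set 'I_n})
    (r : K) (g : {set 'I_n} -> K) (k : nat) (L : nat -> {set 'I_n}) :
  sic_problem A W P ->
  sic_feasible K A W P ->
  sym_securely_achievable A W P r ->
  G_conditions A W P r g ->
  (0 < k)%N ->
  (forall j : nat, (1 <= j)%N -> (j < k)%N ->
     dash A W P (L j) (L j.+1) \/ L j \subset L j.+1) ->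
  g (L 1%N) + r * (\sum_(1 <= l < k) hfun A W (L l) (L l.+1))%:R <= g (L k).
Proof.
move=> Hpb _ _ HG; elim: k => [//|k IH] _ HL.
case: k IH HL => [|k] IH HL.
  by rewrite big_geq // mulr0 addr0.
have IH' := IH isT (fun j h1 h2 => HL j h1 (ltnW h2)).
rewrite big_nat_recr //= natrD mulrDr.
have Hstep : g (L k.+1) + r * (hfun A W (L k.+1) (L k.+2))%:R <= g (L k.+2).
  rewrite /hfun; case: ifP => Hs.
    exact: h_bound HG Hs.
  rewrite mulr0 addr0.
  case: (HL k.+1 isT (leqnn _)) => [Hd|Hs']; last by rewrite Hs' in Hs.
  by rewrite (dash_eq Hpb HG Hd).
lra.
Qed.
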